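(* Let $\mathbf{A} = [\mathbf{A}^1 \dots \mathbf{A}^S] \in \mathbb{R}^{m\times n}$ with $\mathbf{A}^s \in \mathbb{R}^{m \times n^s}$ held at site $s\in\{1,\dots,S\}$, $n = \sum_s n^s$, and let $k \ge 1$ and $I \ge 1$ be integers. Let $\mathbf{G}_0^{\mathrm{init}} \in \mathbb{R}^{n\times k}$ be an initial matrix, and let $\mathbf{G}_0^{s,\mathrm{init}}$ denote its block of rows corresponding to site $s$. Let $\mathtt{orthonormalize}$ denote a fixed orthonormalization routine for $m\times k$ matrices and let $\mathrm{GS}$ denote (centralized) Gram-Schmidt orthonormalization of the columns of a matrix. Centralized vertical subspace iteration (with orthonormalization): $\mathbf{G}_0 = \mathrm{GS}(\mathbf{G}_0^{\mathrm{init}})$; for $i = 1,\dots,I$: $\mathbf{H}_i = \mathtt{orthonormalize}(\mathbf{A}\mathbf{G}_{i-1})$ and $\mathbf{G}_i = \mathrm{GS}(\mathbf{A}^\top \mathbf{H}_i)$. Federated vertical subspace iteration (with orthonormalization): the sites start with $\mathbf{G}_0^{s,\mathrm{init}}$ and orthonormalize them jointly via federated Gram-Schmidt, obtaining $\tilde{\mathbf{G}}_0^s$; for $i=1,\dots,I$: each site computes $\tilde{\mathbf{H}}_i^s = \mathbf{A}^s \tilde{\mathbf{G}}_{i-1}^s$, the aggregator computes $\tilde{\mathbf{H}}_i = \mathtt{orthonormalize}\big(\sum_{s=1}^S \tilde{\mathbf{H}}_i^s\big)$ and sends it to all sites, each site computes $(\mathbf{A}^s)^\top \tilde{\mathbf{H}}_i$,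 and these partial matrices are orthonormalized jointly via federated Gram-Schmidt to give $\tilde{\mathbf{G}}_i^s$. Here federated Gram-Schmidt applied to row blocks $\mathbf{V}^s$ (with columns $\mathbf{v}_i^s$) of a matrix $\mathbf{V}\in\mathbb{R}^{n\times k}$ is the procedure: sites set $\mathbf{u}_1^s=\mathbf{v}_1^s$, $n_1^s = (\mathbf{u}_1^s)^\top\mathbf{u}_1^s$, the aggregator forms $n_1=\sum_s n_1^s$; for $i=2,\dots,k$ sites compute $r_{ij}^s = (\mathbf{u}_j^s)^\top\mathbf{v}_i^s/n_j$ ($j<i$), the aggregator forms $r_{ij}=\sum_s r_{ij}^s$, sites compute $\mathbf{u}_i^s = \mathbf{v}_i^s - \sum_{j<i} r_{ij}\mathbf{u}_j^s$ and $n_i^s = (\mathbf{u}_i^s)^\top\mathbf{u}_i^s$, the aggregator forms $n_i = \sum_s n_i^s$; finally each site outputs $[\mathbf{u}_1^s/\sqrt{n_1}\dots\mathbf{u}_k^s/\sqrt{n_k}]$. Assume all Gram-Schmidt orthonormalizations above are well defined (the matrices being orthonormalized have linearly independent columns). Then centralized and federated vertical subspace iteration are equivalent: for every $i \in \{0,\dots,I\}$ and every site $s$, $\tilde{\mathbf{G}}_i^s$ equals the block of rows of $\mathbf{G}_i$ corresponding to site $s$, and for every $i\in\{1,\dots,I\}$, $\tilde{\mathbf{H}}_i = \mathbf{H}_i$.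
   Context: Setting: a star-shaped federated network with $S$ client sites and one aggregator; the columns of the data matrix $\mathbf{A}$ (samples) are vertically partitioned among the sites. ''Same initialization'' means both algorithms start from the same random initial matrix (same random seeds), the federated one with its row blocks distributed to the sites. The columns of $\mathbf{H}_i$ are candidate left singular vectors and those of $\mathbf{G}_i$ candidate right singular vectors of $\mathbf{A}$. *)

(* Defs.v *)
From mathcomp Require Import all_boot all_order all_algebra.
Set Implicit Arguments. Unset Strict Implicit. Unset Printing Implicit Defensive.
Import Order.TTheory GRing.Theory Num.Theory.
Local Open Scope ring_scope.

Section GS.
Variable R : rcfType.

Section Central.
Variables (n k : nat).

Definition dotc (a b : 'cV[R]_n) : R := (a^T *m b) 0 0.

Definition gs_step (us : seq 'cV[R]_n) (v : 'cV[R]_n) : seq 'cV[R]_n :=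
  rcons us (v - \sum_(u <- us) (dotc u v / dotc u u) *: u).

Definition gs_us (V : 'M[R]_(n, k)) : seq 'cV[R]_n :=
  foldl gs_step [::] [seq col j V | j <- enum 'I_k].

Definition GS (V : 'M[R]_(n, k)) : 'M[R]_(n, k) :=
  \matrix_(r, j) (let u := nth 0 (gs_us V) j in u r 0 / Num.sqrt (dotc u u)).
End Central.

Section Federated.
Variables (S : nat) (ns : 'I_S -> nat) (k : nat).

(* a column vector distributed over the sites: block u s at site s *)
Definition fvec := forall s : 'I_S, 'cV[R]_(ns s).

Definition fzero : fvec := fun s => 0.

Definition fnorm2 (u : fvec) : R := \sum_(s < S) ((u s)^T *m u s) 0 0.

Definition fcoef (u v : fvec) : R :=
  \sum_(s < S) (((u s)^T *m v s) 0 0 / fnorm2 u).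

Definition fgs_step (us : seq fvec) (v : fvec) : seq fvec :=
  rcons us (fun s => v s - \sum_(u <- us) fcoef u v *: u s).

Definition fgs_us (Vs : forall s : 'I_S, 'M[R]_(ns s, k)) : seq fvec :=
  foldl fgs_step [::] [seq (fun s => col j (Vs s)) : fvec | j <- enum 'I_k].

Definition fedGS (Vs : forall s : 'I_S, 'M[R]_(ns s, k)) :
    forall s : 'I_S, 'M[R]_(ns s, k) :=
  fun s => \matrix_(r, j)
    (let u := nth fzero (fgs_us Vs) j in u s r 0 / Num.sqrt (fnorm2 u)).
End Federated.

Section Iterations.
Variables (m S : nat) (ns : 'I_S -> nat) (k : nat).
Variable As : forall s : 'I_S, 'M[R]_(m, ns s).
Variable G0init : 'M[R]_(\sum_(s < S) ns s, k).
Variable orth : 'M[R]_(m, k) -> 'M[R]_(m, k).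

Definition Aglob : 'M[R]_(m, \sum_(s < S) ns s) := \mxrow_(s < S) As s.

Fixpoint cG (i : nat) : 'M[R]_(\sum_(s < S) ns s, k) :=
  match i with
  | 0 => GS G0init
  | i'.+1 => GS (Aglob^T *m orth (Aglob *m cG i'))
  end.
Definition cH (i : nat) : 'M[R]_(m, k) := orth (Aglob *m cG i.-1).

Fixpoint fG (i : nat) : forall s : 'I_S, 'M[R]_(ns s, k) :=
  match i with
  | 0 => fedGS (fun s => @submxcol _ S ns k G0init s)
  | i'.+1 => fedGS (fun s => (As s)^T *m orth (\sum_(s' < S) As s' *m fG i' s'))
  end.
Definition fH (i : nat) : 'M[R]_(m, k) :=
  orth (\sum_(s < S) As s *m fG i.-1 s).

(* the matrix being orthonormalized at step i, centralized and federated
   (the latter stacked as the n x k matrix of its row blocks) *)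
Definition cGSinput (i : nat) : 'M[R]_(\sum_(s < S) ns s, k) :=
  match i with 0 => G0init | i'.+1 => Aglob^T *m orth (Aglob *m cG i') end.
Definition fGSinput (i : nat) : 'M[R]_(\sum_(s < S) ns s, k) :=
  match i with
  | 0 => \mxcol_(s < S) @submxcol _ S ns k G0init s
  | i'.+1 => \mxcol_(s < S) ((As s)^T *m orth (\sum_(s' < S) As s' *m fG i' s'))
  end.
End Iterations.
End GS.

(* Main.v *)
Require Import Defs.
From Stdlib Require Import FunctionalExtensionality.
From mathcomp Require Import all_boot all_order all_algebra.
Import Order.TTheory GRing.Theory Num.Theory.
Local Open Scope ring_scope.

Section Aux.
Variables (R : rcfType) (S : nat) (ns : 'I_S -> nat) (k : nat).

Definition toc (u : fvec R ns) : 'cV[R]_(\sum_(s < S) ns s) := \mxcol_s u s.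

Lemma fnorm2E (u : fvec R ns) : fnorm2 u = dotc (toc u) (toc u).
Proof.
rewrite /fnorm2 /dotc /toc tr_mxcol mul_mxrow_mxcol summxE.
by [].
Qed.

Lemma fcoefE (u v : fvec R ns) : fcoef u v = dotc (toc u) (toc v) / dotc (toc u) (toc u).
Proof.
rewrite /fcoef -fnorm2E -mulr_suml /dotc /toc tr_mxcol mul_mxrow_mxcol summxE.
by [].
Qed.

Lemma toc_step (us : seq (fvec R ns)) (v : fvec R ns) :
  toc (fun s => v s - \sum_(u <- us) fcoef u v *: u s)
  = toc v - \sum_(u <- map toc us) (dotc u (toc v) / dotc u u) *: u.
Proof.
apply/matrixP => i j; rewrite /toc !mxE big_map !summxE.
congr (_ - _); apply: eq_bigr => u _; rewrite !mxE fcoefE //.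
Qed.

Lemma toc_fold (us vs : seq (fvec R ns)) :
  map toc (foldl (@fgs_step R S ns) us vs) = foldl (@gs_step R _) (map toc us) (map toc vs).
Proof.
elim: vs us => [|v vs IH] us //=.
rewrite IH /fgs_step /gs_step map_rcons toc_step //.
Qed.

Lemma toc0 : toc (fzero R ns) = 0.
Proof. by apply/matrixP => i j; rewrite !mxE. Qed.

Lemma nth_toc (l : seq (fvec R ns)) j : nth 0 (map toc l) j = toc (nth (fzero R ns) l j).
Proof.
elim: l j => [|x l IH] [|j] //=; by rewrite toc0.
Qed.

Lemma fedGS_sub (V : 'M[R]_(\sum_(s < S) ns s, k)) s :
  fedGS (fun s => submxcol V s) s = submxcol (GS V) s.
Proof.
have Hus : map toc (fgs_us (fun s => submxcol V s)) = gs_us V.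
  rewrite /fgs_us /gs_us toc_fold /= -map_comp; congr foldl.
  apply: eq_map => j /=; apply/matrixP => a b; rewrite /toc !mxE tagnat.sig2K //.
rewrite /fedGS /=; apply/matrixP => r j; rewrite /GS !mxE -Hus nth_toc -fnorm2E.
set u := nth _ _ j; congr (_ / _).
have := congr1 (fun M : 'M_(ns s, 1) => M r 0) (mxcolK (fun s => u s) s).
by rewrite [X in X = _ -> _]/= mxE /toc => ->.
Qed.
End Aux.

Theorem mainTheorem2 (R : rcfType) (m S : nat) (ns : 'I_S -> nat) (k I : nat)
  (As : forall s : 'I_S, 'M[R]_(m, ns s))
  (G0init : 'M[R]_(\sum_(s < S) ns s, k))
  (orth : 'M[R]_(m, k) -> 'M[R]_(m, k)) :
  (1 <= k)%N -> (1 <= I)%N ->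
  (* all Gram-Schmidt orthonormalizations are well defined *)
  (forall i, (i <= I)%N -> \rank (cGSinput As G0init orth i) = k) ->
  (forall i, (i <= I)%N -> \rank (fGSinput As G0init orth i) = k) ->
  (forall i, (i <= I)%N -> forall s : 'I_S,
      fG As G0init orth i s = @submxcol _ S ns k (cG As G0init orth i) s) /\
  (forall i, (1 <= i <= I)%N -> fH As G0init orth i = cH As G0init orth i).
Proof.
move=> _ _ _ _.
have Hsum : forall (X : 'M[R]_(\sum_(s < S) ns s, k)),
    \sum_(s < S) As s *m submxcol X s = Aglob As *m X.
  by move=> X; rewrite /Aglob -{2}(submxcolK X) mul_mxrow_mxcol.
have Hall : forall i s, fG As G0init orth i s = submxcol (cG As G0init orth i) s.
  elim=> [|i IH] s /=; first by rewrite fedGS_sub.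
  under eq_bigr do rewrite IH.
  rewrite Hsum.
  have -> : (fun s => (As s)^T *m orth (Aglob As *m cG As G0init orth i))
    = (fun s => submxcol ((Aglob As)^T *m orth (Aglob As *m cG As G0init orth i)) s).
    apply: functional_extensionality_dep => s'.
    by rewrite -submxcol_mul /Aglob tr_mxrow mxcolK.
  by rewrite fedGS_sub.
split => [i _ s|i _]; first exact: Hall.
rewrite /fH /cH; under eq_bigr do rewrite Hall.
by rewrite Hsum.
Qed.
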